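(* Let $p_{l_n}$ be a probability density function on $[0,\infty)$ (the normalized square-radius density), and let $F_{l_n}(\tau)=\int_0^{\tau}p_{l_n}(x)\,dx$ denote its cumulative distribution function. For a positive integer $N$ and $\beta>0$ define $$P_e(N,\beta)=\int_0^\infty\left[1-\frac{1}{\Gamma(N/2)}\,\gamma\!\left(\frac{N}{2},\frac{N\beta x}{2}\right)\right]p_{l_n}(x)\,dx .$$ Let $\tau=1/\beta$ and $P_e^a(\tau)=\lim_{N\to\infty}P_e(N,\beta)$. Then $$P_e^a(\tau)=\lim_{N\to\infty}P_e(N,\beta)=\int_0^{1/\beta}p_{l_n}(x)\,dx=\int_0^{\tau}p_{l_n}(x)\,dx=F_{l_n}(\tau).$$
   Context: $\Gamma$ is the gamma function and $\gamma(\alpha,x)=\int_0^x e^{-t}t^{\alpha-1}\,dt$ (for $\alpha>0$) is the lower incomplete gamma function. The quantity $P_e(N,\beta)$ is the word error rate of a length-$N$ binary linear block code with BPSK in AWGN at SNR $\beta=2E_s/N_0$, where $p_{l_n}$ is the density of the square radius of the decision region (in the direction of the noise) normalized by $NE_s$; the density $p_{l_n}$ is held fixed as $N\to\infty$. *)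

(* Defs.v *)
From HB Require Import structures.
From mathcomp Require Import all_boot all_order all_algebra.
From mathcomp Require Import all_classical all_reals all_analysis.
Set Implicit Arguments. Unset Strict Implicit. Unset Printing Implicit Defensive.
Import Order.TTheory GRing.Theory Num.Theory.
Import numFieldNormedType.Exports.
Local Open Scope classical_set_scope.
Local Open Scope ring_scope.

Definition Gamma {R : realType} (a : R) : R :=
  Rintegral lebesgue_measure `[0, +oo[ (fun t : R => expR (- t) * t `^ (a - 1)).

Definition lower_inc_gamma {R : realType} (a x : R) : R :=
  Rintegral lebesgue_measure `[0, x] (fun t : R => expR (- t) * t `^ (a - 1)).

Definition F_ln {R : realType} (p : R -> R) (tau : R) : R :=
  Rintegral lebesgue_measure `[0, tau] p.

Definition Pe_wer {R : realType} (p : R -> R) (N : nat) (beta : R) : R :=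
  Rintegral lebesgue_measure `[0, +oo[
    (fun x : R => (1 - (Gamma (N%:R / 2))^-1 *
                        lower_inc_gamma (N%:R / 2) (N%:R * beta * x / 2)) * p x).

(* Main.v *)
Require Import Defs.
From HB Require Import structures.
From mathcomp Require Import all_boot all_order all_algebra.
From mathcomp Require Import all_classical all_reals all_analysis.
From mathcomp Require Import ring lra measurable_realfun.
Import Order.TTheory GRing.Theory Num.Theory.
Import numFieldNormedType.Exports.
Local Open Scope classical_set_scope.
Local Open Scope ring_scope.


Local Open Scope classical_set_scope.
Local Open Scope ring_scope.

Section expint.
Context {R : realType}.
Local Notation mu := (@lebesgue_measure R).

Lemma is_derive_aff (k c x : R) : is_derive x 1 (fun t : R => k * t + c) k.
Proof.
have := is_deriveD (is_deriveZ k (is_derive_id x (1:R))) (is_derive_cst c x 1).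
by rewrite /GRing.scale/= mulr1 addr0.
Qed.

Lemma is_derive_expaff (k c x : R) : k != 0 ->
  is_derive x 1 (fun t => k^-1 * expR (k * t + c)) (expR (k * x + c)).
Proof.
move=> k0.
have := @is_derive1_comp R expR (fun t => k * t + c) x _ _ (is_derive_expR (k * x + c)) (is_derive_aff k c x).
move=> h.
have := is_deriveZ k^-1 h.
rewrite /GRing.scale/= mulrCA mulVf// mulr1.
by [].
Qed.
End expint.

Section expint2.
Context {R : realType}.
Local Notation mu := (@lebesgue_measure R).

Lemma cont_expaff (k c : R) : continuous (fun t : R => expR (k * t + c)).
Proof.
move=> x; apply: differentiable_continuous; apply/derivable1_diffP.
have := @is_derive1_comp R expR (fun t => k * t + c) x _ _ (is_derive_expR (k * x + c)) (is_derive_aff k c x).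
by move=> h; exact: ex_derive.
Qed.

Lemma cont_expaffK (k c : R) : continuous (fun t : R => k^-1 * expR (k * t + c)).
Proof.
move=> x; apply: (@continuousM _ _ (cst k^-1) (fun t => expR (k * t + c))).
  exact: cst_continuous.
exact: cont_expaff.
Qed.

Lemma int_expaff_cc (k c a b : R) : k != 0 -> a < b ->
  (\int[mu]_(t in `[a, b]) (expR (k * t + c))%:E =
   (k^-1 * expR (k * b + c) - k^-1 * expR (k * a + c))%:E)%E.
Proof.
move=> k0 ab.
rewrite (@continuous_FTC2 R _ (fun t => k^-1 * expR (k * t + c))) //.
- exact/continuous_subspaceT/cont_expaff.
- split.
  + move=> x _; apply: ex_derive; exact: (is_derive_expaff k c x k0).
  + exact/cvg_at_right_filter/cont_expaffK.
  + exact/cvg_at_left_filter/cont_expaffK.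
- move=> x _; rewrite derive1E.
  have h := is_derive_expaff k c x k0; exact: derive_val.
Qed.

Lemma expaff_cvgy (k c : R) : k < 0 ->
  (k^-1 * expR (k * t + c)) @[t --> +oo] --> 0.
Proof.
move=> k0.
rewrite -(mulr0 k^-1); apply: cvgMr.
have -> : (fun t => expR (k * t + c)) = (fun z => expR (- z)) \o (fun t => - (k * t + c)).
  by apply/funext => t /=; rewrite opprK.
apply: (@cvg_comp _ _ _ _ _ _ (pinfty_nbhs R)); last exact: cvgr_expR.
apply/cvgryPge => A.
near=> t.
have ht : (A + c) / (- k) <= t by near: t; apply: nbhs_pinfty_ge; exact: num_real.
rewrite ler_pdivrMr ?oppr_gt0// in ht.
nra.
Unshelve. all: by end_near.
Qed.

Lemma int_expaff_cy (k c a : R) : k < 0 ->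
  (\int[mu]_(t in `[a, +oo[) (expR (k * t + c))%:E =
   (- (k^-1 * expR (k * a + c)))%:E)%E.
Proof.
move=> k0; have k0' : k != 0 by rewrite ltr0_neq0.
rewrite (@ge0_continuous_FTC2y R _ (fun t => k^-1 * expR (k * t + c)) _ 0) //.
- by rewrite sub0e.
- exact/continuous_subspaceT/cont_expaff.
- exact: expaff_cvgy.
- exact/cvg_at_right_filter/cont_expaffK.
- move=> x _; rewrite derive1E.
  have h := is_derive_expaff k c x k0'; exact: derive_val.
Qed.

End expint2.

Local Open Scope classical_set_scope.
Local Open Scope ring_scope.

Section gf.
Context {R : realType}.
Local Notation mu := (@lebesgue_measure R).

Definition gf (m t : R) := expR (- t) * t `^ m.

Lemma gf_ge0 (m t : R) : 0 <= gf m t.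
Proof. by rewrite /gf mulr_ge0 ?expR_ge0 ?powR_ge0. Qed.

Lemma gf_pos (m t : R) : 0 < t -> gf m t = expR (m * ln t - t).
Proof.
move=> t0; rewrite /gf /powR gt_eqF// expRD mulrC; congr (_ * _).
Qed.

Lemma measurable_gf (m : R) : measurable_fun setT (gf m).
Proof.
apply: measurable_realfun.measurable_funM; last exact: measurable_powR.
apply: measurableT_comp; first exact: measurable_expR.
exact: oppr_measurable.
Qed.

Lemma ln_ineq {b t : R} : 0 < b -> 0 < t -> b * (ln t - ln b) <= t - b.
Proof.
move=> b0 t0.
have h : -1 < t / b - 1 by have := divr_gt0 t0 b0; lra.
have := le_ln1Dx h; rewrite addrC subrK ln_div ?posrE//.
move=> H; have := ler_wpM2l (ltW b0) H.
have -> : b * (t / b - 1) = t - b by field; rewrite gt_eqF.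
by [].
Qed.

Lemma gf_tangent (m b t : R) : 0 <= m -> 0 < b -> 0 < t ->
  gf m t <= expR ((m / b - 1) * t + (m * ln b - b - (m / b - 1) * b)).
Proof.
move=> m0 b0 t0; rewrite gf_pos// ler_expR.
have := ln_ineq b0 t0.
set q := m / b.
have qb : q * b = m by rewrite /q mulrVK ?unitfE ?gt_eqF.
have q0 : 0 <= q by rewrite /q divr_ge0// ltW.
move=> H; rewrite -qb; nra.
Qed.

Lemma gf_mono1 (m b t : R) : 0 < b -> b <= t -> t <= m -> gf m b <= gf m t.
Proof.
move=> b0 bt tm; have t0 : 0 < t by exact: lt_le_trans bt.
rewrite !gf_pos// ler_expR.
have := ln_ineq t0 b0 => H.
have u0 : 0 <= ln t - ln b by rewrite subr_ge0 ler_ln ?posrE.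
nra.
Qed.

Lemma gf_mono2 (m b t : R) : 0 < m -> m <= t -> t <= b -> gf m b <= gf m t.
Proof.
move=> m0 mt tb; have t0 : 0 < t by exact: lt_le_trans mt.
have b0 : 0 < b by exact: lt_le_trans tb.
rewrite !gf_pos// ler_expR.
have := ln_ineq t0 b0 => H.
have u0 : 0 <= ln b - ln t by rewrite subr_ge0 ler_ln ?posrE.
nra.
Qed.

End gf.

Local Open Scope classical_set_scope.
Local Open Scope ring_scope.

Section gfint.
Context {R : realType}.
Local Notation mu := (@lebesgue_measure R).

Lemma mgf (m : R) (D : set R) : measurable_fun D (fun t => (gf m t)%:E).
Proof.
apply/measurable_EFinP.
exact: measurable_funS (measurable_gf m).
Qed.

Lemma mexpaff (k c : R) (D : set R) : measurable_fun D (fun t => (expR (k * t + c))%:E).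
Proof.
apply/measurable_EFinP.
apply: measurable_funS (continuous_measurable_fun (cont_expaff k c)) => //.
Qed.

Lemma gf_tail (m b : R) : 0 < m -> m < b ->
  (\int[mu]_(t in `[b, +oo[) (gf m t)%:E <= (gf m b * (b / (b - m)))%:E)%E.
Proof.
move=> m0 mb; have b0 : 0 < b by exact: lt_trans mb.
set k := m / b - 1.
have k0 : k < 0 by rewrite /k subr_lt0 ltr_pdivrMr// mul1r.
apply: le_trans.
  apply: (@ge0_le_integral _ _ _ mu _ _ _ (fun t => (expR (k * t + (m * ln b - b - k * b)))%:E)) => //.
  - by move=> x _; rewrite lee_fin gf_ge0.
  - exact: mgf.
  - exact: mexpaff.
  - move=> x; rewrite /= in_itv/= andbT => bx.
    rewrite lee_fin; apply: gf_tangent => //; first exact: ltW.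
    exact: lt_le_trans bx.
rewrite int_expaff_cy// lee_fin gf_pos//.
have -> : k * b + (m * ln b - b - k * b) = m * ln b - b by ring.
rewrite le_eqVlt; apply/orP; left; apply/eqP.
have bm : b - m != 0 by rewrite subr_eq0 gt_eqF.
have -> : k = - ((b - m) / b) by rewrite /k; field; rewrite gt_eqF.
rewrite invrN invf_div; field.
by [].
Qed.
Lemma gf0 (m : R) : 0 < m -> gf m 0 = 0.
Proof. by move=> m0; rewrite /gf powR0 ?mulr0// gt_eqF. Qed.

Lemma gf_head (m b : R) : 0 < b -> b < m ->
  (\int[mu]_(t in `[0%R, b]) (gf m t)%:E <= (gf m b * (b / (m - b)))%:E)%E.
Proof.
move=> b0 bm; have m0 : 0 < m by exact: lt_trans bm.
set k := m / b - 1.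
have k0 : 0 < k by rewrite /k subr_gt0 ltr_pdivlMr// mul1r.
apply: le_trans.
  apply: (@ge0_le_integral _ _ _ mu _ _ _ (fun t => (expR (k * t + (m * ln b - b - k * b)))%:E)) => //.
  - by move=> x _; rewrite lee_fin gf_ge0.
  - exact: mgf.
  - exact: mexpaff.
  - move=> x; rewrite /= in_itv/= => /andP[x0 xb].
    rewrite lee_fin; have [->|xpos] := eqVneq x 0.
      by rewrite gf0// expR_ge0.
    apply: gf_tangent => //; first exact: ltW.
    by rewrite lt_neqAle eq_sym xpos x0.
rewrite int_expaff_cc ?gt_eqF// lee_fin gf_pos//.
have -> : k * b + (m * ln b - b - k * b) = m * ln b - b by ring.
have h : 0 <= k^-1 * expR (k * 0 + (m * ln b - b - k * b)).
  by rewrite mulr_ge0 ?expR_ge0// invr_ge0 ltW.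
apply: le_trans (_ : k^-1 * expR (m * ln b - b) <= _); first lra.
rewrite le_eqVlt; apply/orP; left; apply/eqP.
have bm' : m - b != 0 by rewrite subr_eq0 gt_eqF.
have -> : k = (m - b) / b by rewrite /k; field; rewrite gt_eqF.
rewrite invf_div; field.
by [].
Qed.

Lemma gf_low (m v b c : R) : 0 <= v -> b < c -> (forall t, b <= t <= c -> v <= gf m t) ->
  (((c - b) * v)%:E <= \int[mu]_(t in `[b, c]) (gf m t)%:E)%E.
Proof.
move=> v0 bc H.
apply: le_trans; last first.
  apply: (@ge0_le_integral _ _ _ mu _ _ (fun t => v%:E)) => //.
  all: try (by move=> x _; rewrite lee_fin).
  - exact: mgf.
rewrite integral_cst//= lebesgue_measure_itv/= lte_fin bc -EFinD -EFinM.
by rewrite mulrC.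
Qed.

End gfint.

Local Open Scope classical_set_scope.
Local Open Scope ring_scope.

Section gam.
Context {R : realType}.
Local Notation mu := (@lebesgue_measure R).

Lemma gf_integrable {m : R} : 0 < m -> mu.-integrable `[0, +oo[ (EFin \o gf m).
Proof.
move=> m0; apply/integrableP; split; first exact: mgf.
under eq_integral do rewrite gee0_abs ?lee_fin ?gf_ge0//.
set b := 2 * m.
have mb : m < b by rewrite /b; lra.
have b0 : 0 < b by lra.
set k := m / b - 1.
have k0 : k < 0 by rewrite /k subr_lt0 ltr_pdivrMr// mul1r.
apply: le_lt_trans.
  apply: (@ge0_le_integral _ _ _ mu _ _ _ (fun t => (expR (k * t + (m * ln b - b - k * b)))%:E)) => //.
  - by move=> x _; rewrite lee_fin gf_ge0.
  - exact: mgf.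
  - exact: mexpaff.
  - move=> x; rewrite /= in_itv/= andbT => x0.
    rewrite lee_fin; have [->|xpos] := eqVneq x 0.
      by rewrite gf0// expR_ge0.
    apply: gf_tangent => //; first exact: ltW.
    by rewrite lt_neqAle eq_sym xpos x0.
by rewrite int_expaff_cy// ltry.
Qed.

Definition Gam (m : R) := fine (\int[mu]_(t in `[0%R, +oo[) (gf m t)%:E).
Definition lig (m y : R) := fine (\int[mu]_(t in `[0%R, y]) (gf m t)%:E).

Lemma GamE (m : R) : 0 < m -> (\int[mu]_(t in `[0%R, +oo[) (gf m t)%:E)%E = (Gam m)%:E.
Proof. by move=> m0; rewrite /Gam fineK// (integrable_fin_num _ (gf_integrable m0)). Qed.

Lemma lig_integrable {m : R} (y : R) : 0 < m -> mu.-integrable `[0, y] (EFin \o gf m).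
Proof.
move=> m0; apply: integrableS (gf_integrable m0) => //.
by apply: subset_itvl; rewrite bnd_simp.
Qed.

Lemma ligE (m y : R) : 0 < m -> (\int[mu]_(t in `[0%R, y]) (gf m t)%:E)%E = (lig m y)%:E.
Proof. by move=> m0; rewrite /lig fineK// (integrable_fin_num _ (lig_integrable y m0)). Qed.

Lemma lig_ge0 (m y : R) : 0 <= lig m y.
Proof. by rewrite /lig fine_ge0// integral_ge0// => x _; rewrite lee_fin gf_ge0. Qed.

Lemma lig_le (m y : R) : 0 < m -> lig m y <= Gam m.
Proof.
move=> m0; rewrite -lee_fin -ligE// -GamE//.
apply: ge0_subset_integral => //.
- exact: mgf.
- by move=> x _; rewrite lee_fin gf_ge0.
- by apply: subset_itvl; rewrite bnd_simp.
Qed.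

Lemma Gam_low (m v b c : R) : 0 < m -> 0 <= b -> 0 <= v -> b < c -> (forall t, b <= t <= c -> v <= gf m t) ->
  (c - b) * v <= Gam m.
Proof.
move=> m0 b0 v0 bc H; rewrite -lee_fin -GamE//.
apply: le_trans (@gf_low R m v b c v0 bc H) _ => //.
apply: ge0_subset_integral => //.
- exact: mgf.
- by move=> x _; rewrite lee_fin gf_ge0.
- by apply: subset_itv; rewrite bnd_simp// ltW.
Qed.

Lemma Gam_gt0 (m : R) : 0 < m -> 0 < Gam m.
Proof.
move=> m0.
have h := @Gam_low m (gf m (m / 2)) (m / 2) m m0 ltac:(lra) (gf_ge0 _ _) ltac:(lra) (fun t ht => @gf_mono1 R m (m/2) t ltac:(lra) (proj1 (andP ht)) (proj2 (andP ht))).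
apply: lt_le_trans h; apply: mulr_gt0; first lra.
by rewrite gf_pos ?expR_gt0//; lra.
Qed.

Lemma lig_small (m b : R) : 0 < b -> b < m -> lig m b <= Gam m * (b / (m - b) ^+ 2).
Proof.
move=> b0 bm; have m0 : 0 < m by lra.
have h1 := @gf_head R m b b0 bm; rewrite ligE// lee_fin in h1.
have h2 := @Gam_low m (gf m b) b m m0 (ltW b0) (gf_ge0 _ _) bm (fun t ht => @gf_mono1 R m b t b0 (proj1 (andP ht)) (proj2 (andP ht))).
apply: le_trans h1 _.
have mb : 0 < m - b by lra.
have -> : gf m b * (b / (m - b)) = ((m - b) * gf m b) * (b / (m - b) ^+ 2).
  by field; rewrite gt_eqF.
apply: ler_wpM2r => //; rewrite divr_ge0 ?exprn_ge0; lra.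
Qed.

Lemma lig_large (m b : R) : 0 < m -> m < b -> Gam m - lig m b <= Gam m * (b / (b - m) ^+ 2).
Proof.
move=> m0 mb; have b0 : 0 < b by lra.
have h1 := @gf_tail R m b m0 mb.
have h2 := @Gam_low m (gf m b) m b m0 (ltW m0) (gf_ge0 _ _) mb (fun t ht => @gf_mono2 R m b t m0 (proj1 (andP ht)) (proj2 (andP ht))).
have split : (Gam m)%:E = ((lig m b)%:E + \int[mu]_(t in `]b, +oo[) (gf m t)%:E)%E.
  rewrite -GamE// -ligE//.
  rewrite (@itv_bndbnd_setU _ _ (BLeft 0) (BRight b) (BInfty _ false)); last 2 first.
  - by rewrite bnd_simp ltW.
  - by [].
  rewrite ge0_integral_setU//.
  - exact: mgf.
  - by move=> x _; rewrite lee_fin gf_ge0.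
  - apply/disj_setPS => x [] /=; rewrite !in_itv/= => /andP[_ xb] /andP[bx _].
    lra.
have h3 : (\int[mu]_(t in `]b, +oo[) (gf m t)%:E <= \int[mu]_(t in `[b, +oo[) (gf m t)%:E)%E.
  apply: ge0_subset_integral => //.
  - exact: mgf.
  - by move=> x _; rewrite lee_fin gf_ge0.
  - by apply: subset_itvr; rewrite bnd_simp.
have h4 : ((Gam m - lig m b)%:E <= (gf m b * (b / (b - m)))%:E)%E.
  rewrite EFinB split addeAC subee ?add0e//.
  exact: le_trans h3 h1.
rewrite lee_fin in h4; apply: le_trans h4 _.
have bm' : 0 < b - m by lra.
have -> : gf m b * (b / (b - m)) = ((b - m) * gf m b) * (b / (b - m) ^+ 2).
  by field; rewrite gt_eqF.
apply: ler_wpM2r => //; rewrite divr_ge0 ?exprn_ge0; lra.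
Qed.

End gam.

Local Open Scope classical_set_scope.
Local Open Scope ring_scope.

Section conv.
Context {R : realType}.
Local Notation mu := (@lebesgue_measure R).

Lemma cvg_le_N (u : nat -> R) (K : R) : 0 <= K ->
  (\forall N \near \oo, 0 <= u N /\ u N * N%:R <= K) -> u N @[N --> \oo] --> 0.
Proof.
move=> K0 H.
apply: (@squeeze_cvgr _ _ _ _ (cst 0) (fun N => (2 * K) * harmonic N)); last 2 first.
- exact: cvg_cst.
- rewrite -(mulr0 (2 * K)); apply: cvgMr; exact: cvg_harmonic.
near=> N.
have [u0 uK] : 0 <= u N /\ u N * N%:R <= K by near: N; exact: H.
have N1 : 1 <= N%:R :> R by near: N; exact: nbhs_infty_ger.
rewrite u0 /=.
have -> : 2 * K * harmonic N = (2 * K) / (N%:R + 1) by rewrite /harmonic/= natr1.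
rewrite ler_pdivlMr; last lra.
have : u N * N%:R <= K := uK.
nra.
Unshelve. all: by end_near.
Qed.

Lemma lig_mono (m y y' : R) : 0 < m -> y <= y' -> lig m y <= lig m y'.
Proof.
move=> m0 yy; rewrite -lee_fin -!ligE//.
apply: ge0_subset_integral => //.
- exact: mgf.
- by move=> x _; rewrite lee_fin gf_ge0.
- by apply: subset_itvl; rewrite bnd_simp.
Qed.

Lemma small_cvg (c : R) : 0 <= c -> c < 1 ->
  (Gam (N%:R / 2 - 1))^-1 * lig (N%:R / 2 - 1) (N%:R * c / 2) @[N --> \oo] --> 0.
Proof.
move=> c0 c1.
set c' := (1 + c) / 2; set d := 1 - c'.
have d0 : 0 < d by rewrite /d /c'; lra.
have c'0 : 0 < c' by rewrite /c'; lra.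
have cc' : c <= c' by rewrite /c'; lra.
apply: (@cvg_le_N _ (8 * c' / d ^+ 2)).
  by rewrite divr_ge0 ?exprn_ge0; lra.
near=> N.
have N4 : 4 <= N%:R :> R by near: N; exact: nbhs_infty_ger.
have Nd : 4 / d <= N%:R :> R by near: N; exact: nbhs_infty_ger.
rewrite ler_pdivrMr // in Nd.
set Nr := N%:R : R in N4 Nd *.
set m := Nr / 2 - 1.
set b := Nr * c' / 2.
have m0 : 0 < m by rewrite /m; lra.
have b0 : 0 < b by rewrite /b; apply: divr_gt0 => //; apply: mulr_gt0 => //; lra.
have e : Nr * d = Nr - Nr * c' by rewrite /d; ring.
have mb : m - b >= Nr * d / 4 by rewrite /m /b; lra.
have bm : b < m by nra.
set G := Gam m; set L := lig m (Nr * c / 2).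
have G0 : 0 < G by exact: Gam_gt0.
have L0 : 0 <= L by exact: lig_ge0.
have LLb : L <= lig m b by apply: lig_mono => //; rewrite /b; nra.
have Lb := @lig_small R m b b0 bm.
have Lb' : lig m b * (m - b) ^+ 2 <= G * b.
  by rewrite -ler_pdivlMr ?exprn_gt0 ?subr_gt0// -mulrA.
have h1 : L * (Nr * d / 4) ^+ 2 <= G * b.
  apply: le_trans Lb'; apply: ler_pM => //.
  - by rewrite exprn_ge0//; nra.
  - by rewrite lerXn2r// ?nnegrE; nra.
have h2 : L * Nr * d ^+ 2 <= 8 * c' * G.
  have : L * Nr * d ^+ 2 * Nr <= 8 * c' * G * Nr.
    move: h1; rewrite /b; nra.
  move=> h; rewrite -(ler_pM2r (_ : 0 < Nr)); last lra.
  exact: h.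
split; first by rewrite mulr_ge0// invr_ge0 ltW.
rewrite -subr_ge0.
have -> : 8 * c' / d ^+ 2 - G^-1 * L * Nr = (8 * c' * G - L * Nr * d ^+ 2) / (G * d ^+ 2).
  by field; rewrite !gt_eqF.
by rewrite divr_ge0 ?subr_ge0// mulr_ge0 ?exprn_ge0// ltW.
Unshelve. all: by end_near.
Qed.

Lemma large_cvg (c : R) : 1 < c ->
  1 - (Gam (N%:R / 2 - 1))^-1 * lig (N%:R / 2 - 1) (N%:R * c / 2) @[N --> \oo] --> 0.
Proof.
move=> c1.
set d := c - 1.
have d0 : 0 < d by rewrite /d; lra.
apply: (@cvg_le_N _ (2 * c / d ^+ 2)).
  by rewrite divr_ge0 ?exprn_ge0; lra.
near=> N.
have N4 : 4 <= N%:R :> R by near: N; exact: nbhs_infty_ger.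
set Nr := N%:R : R in N4 *.
set m := Nr / 2 - 1.
set b := Nr * c / 2.
have m0 : 0 < m by rewrite /m; lra.
have e : Nr * d = Nr * c - Nr by rewrite /d; ring.
have Nd0 : 0 <= Nr * d by apply: mulr_ge0; lra.
have mb : b - m >= Nr * d / 2 by rewrite /m /b; lra.
have bm : m < b by rewrite /m /b; lra.
set G := Gam m; set L := lig m b.
have G0 : 0 < G by exact: Gam_gt0.
have LG : L <= G by exact: lig_le.
have Lb := @lig_large R m b m0 bm.
have Lb' : (G - L) * (b - m) ^+ 2 <= G * b.
  by rewrite -ler_pdivlMr ?exprn_gt0 ?subr_gt0// -mulrA.
have h1 : (G - L) * (Nr * d / 2) ^+ 2 <= G * b.
  apply: le_trans Lb'; apply: ler_pM => //.
  - by rewrite subr_ge0.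
  - by rewrite exprn_ge0//; lra.
  - by rewrite lerXn2r// ?nnegrE; lra.
have h2 : (G - L) * Nr * d ^+ 2 <= 2 * c * G.
  have : (G - L) * Nr * d ^+ 2 * Nr <= 2 * c * G * Nr.
    move: h1; rewrite /b; nra.
  move=> h; rewrite -(ler_pM2r (_ : 0 < Nr)); last lra.
  exact: h.
have -> : 1 - G^-1 * L = (G - L) / G by field; rewrite gt_eqF.
split; first by rewrite divr_ge0 ?subr_ge0// ltW.
rewrite -subr_ge0.
have -> : 2 * c / d ^+ 2 - (G - L) / G * Nr = (2 * c * G - (G - L) * Nr * d ^+ 2) / (G * d ^+ 2).
  by field; rewrite !gt_eqF.
by rewrite divr_ge0 ?subr_ge0// mulr_ge0 ?exprn_ge0// ltW.
Unshelve. all: by end_near.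
Qed.

End conv.

Lemma GammaE (R : realType) (a : R) : Gamma a = Gam (a - 1).
Proof. by []. Qed.

Lemma ligDef (R : realType) (a x : R) : lower_inc_gamma a x = lig (a - 1) x.
Proof. by []. Qed.

Theorem mainTheorem1 (R : realType) (p : R -> R) (beta : R)
  (p_meas : measurable_fun (`[0, +oo[ : set R) p)
  (p_ge0 : forall x : R, 0 <= x -> 0 <= p x)
  (p_tot : (\int[@lebesgue_measure R]_(x in (`[0%R, +oo[ : set R)) (p x)%:E = 1)%E)
  (beta_gt0 : 0 < beta) :
  Pe_wer p N beta @[N --> \oo] --> F_ln p beta^-1.
Proof.
set mu := @lebesgue_measure R.
set I := (`[0%R, +oo[%classic : set R).
set A := (`[0%R, beta^-1]%classic : set R).
set D := I `\ beta^-1.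
have mD : measurable D.
  apply: measurableD; first exact: measurable_itv.
  exact: measurable_set1.
have DI : D `<=` I by move=> x [].
have AI : A `<=` I by apply: subset_itvl; rewrite bnd_simp.
pose r (N : nat) (x : R) := (Gam (N%:R / 2 - 1))^-1 * lig (N%:R / 2 - 1) (N%:R * (beta * x) / 2).
pose h (N : nat) (x : R) := (1 - r N x) * p x.
have PeE N : Pe_wer p N beta = fine (\int[mu]_(x in I) (h N x)%:E)%E.
  rewrite /Pe_wer /Rintegral; apply: congr1; apply: eq_integral => x _ /=.
  rewrite /h /r GammaE ligDef (mulrA N%:R beta x).
  reflexivity.
have pint : mu.-integrable I (EFin \o p).
  apply/integrableP; split; first exact/measurable_EFinP.
  have -> : (\int[mu]_(x in I) `|(EFin \o p) x| = \int[mu]_(x in I) (p x)%:E)%E.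
    apply: eq_integral => x; rewrite inE /= => x0; have {}x0 : 0 <= x by move: x0; rewrite /I /= in_itv /= andbT.
    by rewrite ger0_norm// p_ge0.
  by rewrite p_tot ltry.
have r01 N x : (4 <= N)%N -> 0 <= x -> 0 <= r N x <= 1.
  move=> N4 x0.
  have m0 : 0 < N%:R / 2 - 1 :> R.
    have : 4 <= N%:R :> R by rewrite (ler_nat R 4 N).
    lra.
  apply/andP; split.
    by rewrite /r mulr_ge0 ?lig_ge0// invr_ge0 ltW// Gam_gt0.
  rewrite /r ler_pdivrMl ?Gam_gt0// mulr1.
  exact: lig_le.
have m0 N : (4 <= N)%N -> 0 < N%:R / 2 - 1 :> R.
  move=> N4; have : 4 <= N%:R :> R by rewrite (ler_nat R 4 N).
  lra.
have rnd N : (4 <= N)%N -> nondecreasing_fun (r N).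
  move=> N4 x y xy; rewrite /r ler_wpM2l//.
    by rewrite invr_ge0 ltW// Gam_gt0// m0.
  apply: lig_mono; first exact: m0.
  rewrite ler_pM2r// ler_pM2l ?ltr0n; last by case: N N4.
  by rewrite ler_pM2l.
have mh N : (4 <= N)%N -> measurable_fun D (fun x => (h N x)%:E).
  move=> N4; apply/measurable_EFinP.
  apply: measurable_funM; last exact: measurable_funS p_meas.
  apply: (measurable_funB (f:=cst 1) (g:=r N)); first exact: measurable_cst.
  exact: (nondecreasing_measurable mD (rnd N N4)).
have intID N : (4 <= N)%N -> (\int[mu]_(x in I) (h N x)%:E)%E = (\int[mu]_(x in D) (h N x)%:E)%E.
  move=> N4; rewrite /D integral_setD1//; exact: mh.
have mpA : measurable_fun D (fun x => ((p \_ A) x)%:E).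
  apply/measurable_EFinP; apply: (measurable_restrict p _ mD).1.
    exact: measurable_itv.
  apply: measurable_funS p_meas => //; apply: subset_trans AI; exact: subIsetr.
have HF : (\int[mu]_(x in D) ((p \_ A) x)%:E)%E = (F_ln p beta^-1)%:E.
  rewrite /D integral_setD1//.
  rewrite /F_ln /Rintegral fineK; last first.
    apply: integrable_fin_num; first exact: measurable_itv.
    apply: integrableS pint => //; exact: measurable_itv.
  rewrite [RHS]integral_mkcond [LHS]integral_mkcond; apply: eq_integral => x _.
  rewrite !patchE; case: (boolP (x \in A)) => xA; case: (boolP (x \in I)) => xI //=.
  all: try by rewrite ?xA.
  by move: xI; rewrite (_ : x \in I) //; apply/mem_set/AI; move: xA; rewrite inE.
have key : (\int[mu]_(x in D) (h (n + 4)%N x)%:E)%E @[n --> \oo] --> (F_ln p beta^-1)%:E.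
  rewrite -HF.
  apply: (@dominated_cvg _ _ _ mu D mD (fun n x => (h (n + 4)%N x)%:E) _ (fun x => (p x)%:E)).
  - move=> n; apply: mh; exact: leq_addl.
  - move=> x [xI xb].
    have x0 : 0 <= x by move: xI; rewrite /I /= in_itv /= andbT.
    apply: cvg_EFin; first exact: nearW.
    case: (ltgtP x beta^-1) => [xlt|xgt|xeq]; last by exfalso; apply: xb; rewrite xeq.
    + have c0 : 0 <= beta * x by rewrite mulr_ge0// ltW.
      have c1 : beta * x < 1.
        have : beta * x < beta * beta^-1 by rewrite ltr_pM2l.
        by rewrite mulfV ?gt_eqF.
      have := @small_cvg _ _ c0 c1; rewrite -(cvg_shiftn 4) => hr.
      have xA : x \in A by apply/mem_set; rewrite /A /= in_itv /= x0 ltW.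
      rewrite patchE xA.
      have := cvgMr_tmp (b := p x) (cvgB (cvg_cst (1 : R)) hr).
      rewrite subr0 mul1r => H.
      exact: H.
    + have c1 : 1 < beta * x.
        have : beta * beta^-1 < beta * x by rewrite ltr_pM2l.
        by rewrite mulfV ?gt_eqF.
      have := @large_cvg _ _ c1; rewrite -(cvg_shiftn 4) => hr.
      have xA : x \notin A.
        apply/negP; rewrite inE /A /= in_itv /= => /andP[_ xb'].
        by move: xgt; rewrite ltNge xb'.
      rewrite patchE (negbTE xA).
      have := cvgMr_tmp (b := p x) hr.
      rewrite mul0r => H.
      exact: H.
  - by [].
  - have mI' : measurable (I : set (measurableTypeR R)) by exact: measurable_itv.
    have mD' : measurable (D : set (measurableTypeR R)).
      by apply: measurableD; [exact: measurable_itv| exact: measurable_set1].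
    exact: (integrableS mI' mD' DI pint).
  - move=> n x [xI _].
    have x0 : 0 <= x by move: xI; rewrite /I /= in_itv /= andbT.
    have /andP[r0 r1] := r01 (n + 4)%N x (leq_addl n 4) x0.
    rewrite lee_fin /h ger0_norm; last by rewrite mulr_ge0 ?p_ge0// subr_ge0.
    by rewrite ler_piMl ?p_ge0//; lra.
rewrite -(cvg_shiftn 4) /=.
have E : (fun n => Pe_wer p (n + 4)%N beta) =
    (fine \o (fun n => \int[mu]_(x in D) (h (n + 4)%N x)%:E)%E).
  apply/funext => n; rewrite /= PeE intID //; exact: leq_addl.
rewrite E; exact: fine_cvg key.
Qed.
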